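(* Every alternating $2$-regular partition $\lambda$ is obtained from the empty partition by a finite sequence of operations, each of which sends an alternating partition $\mu$ to an alternating partition and is of one of the following two types: (1) (widening) $\mu\mapsto \tilde f_\epsilon^{\,b(\mu)}\mu$ for some $\epsilon\in\{0,1\}$, where $b(\mu)$ is the number of nonzero parts of $\mu$; (2) (deepening) $\mu\mapsto s_\epsilon\mu$ for some $\epsilon\in\{0,1\}$, the action of the simple reflection $s_\epsilon$ on the crystal $B(\Lambda_0)$.
   Context: Setting (level one, $e=2$): $B(\Lambda_0)$ is the crystal of the basic representation of affine $A^{(1)}_1$ (simple roots $\alpha_0,\alpha_1$, coroots $h_0,h_1$), whose elements are labelled by $2$-regular (strict) partitions via the Misra–Miwa/Kleshchev realization, node $(x,y)$ (row $x$, column $y$) having residue $(y-x)\bmod 2$, with Kashiwara operators $\tilde e_i,\tilde f_i$. A $2$-regular partition is \emph{alternating} if the parities of consecutive nonzero parts alternate. The simple reflection acts on a crystal by $s_i b=\tilde f_i^{\,k}b$ if $k=\langle \mathrm{wt}(b),h_i\rangle\ge0$ and $s_ib=\tilde e_i^{\,-k}b$ if $k<0$. *)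

(* Defs.v *)
(* Level-one crystal B(Lambda_0) of affine A_1^(1) (e = 2)
   realized on 2-regular (= strict) partitions, Misra--Miwa/Kleshchev style. *)
From HB Require Import structures.
From mathcomp Require Import all_boot all_order all_algebra.
Set Implicit Arguments. Unset Strict Implicit. Unset Printing Implicit Defensive.
Import Order.TTheory GRing.Theory Num.Theory.

(* A partition is a list of its nonzero parts, weakly decreasing. *)
Definition partition := seq nat.

Definition two_regular (p : partition) : bool :=
  sorted (fun a b => b < a) p && all (fun a => 0 < a) p.

Definition alternating (p : partition) : bool :=
  two_regular p && sorted (fun a b => odd a != odd b) p.

Definition nparts (p : partition) : nat := size p.

(* residue of node (x,y) (row x, column y, 1-indexed) : (y - x) mod 2,
   computed as (y + x) mod 2 (equal since 2x = 0 mod 2). *)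
Definition res (x y : nat) : nat := (y + x) %% 2.

(* length of row x (1-indexed); 0 beyond the last row *)
Definition part (p : partition) (x : nat) : nat := nth 0 p x.-1.

Definition addable (p : partition) (x : nat) : bool :=
  [&& 0 < x, x <= (size p).+1 & (x == 1) || (part p x < part p x.-1)].

Definition removable (p : partition) (x : nat) : bool :=
  [&& 0 < x, x <= size p & part p x.+1 < part p x].

(* i-signature: addable (true = +) and removable (false = -) i-nodes, read
   from the top row to the bottom row (each row carries at most one i-node
   among its addable/removable nodes). *)
Definition signature (p : partition) (i : nat) : seq (nat * bool) :=
  flatten [seq (if addable p x && (res x (part p x).+1 == i)
                then [:: (x, true)] else [::]) ++
               (if removable p x && (res x (part p x) == i)
                then [:: (x, false)] else [::])
          | x <- iota 1 (size p).+1].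

(* cancel adjacent (+,-) pairs repeatedly; result has the form - ... - + ... + *)
Definition red_step (st : seq (nat * bool)) (n : nat * bool) : seq (nat * bool) :=
  match n.2, st with
  | false, (_, true) :: st' => st'
  | _, _ => n :: st
  end.

Definition reduced_signature (p : partition) (i : nat) : seq (nat * bool) :=
  rev (foldl red_step [::] (signature p i)).

Definition add_node (p : partition) (x : nat) : partition :=
  if x == (size p).+1 then rcons p 1 else set_nth 0 p x.-1 (part p x).+1.

Definition remove_node (p : partition) (x : nat) : partition :=
  filter (fun a => 0 < a) (set_nth 0 p x.-1 (part p x).-1).

(* Kashiwara operators; None stands for 0. f adds the leftmost uncancelled +
   (the good addable node), e removes the rightmost uncancelled - (the good
   removable node). *)
Definition ftil (i : nat) (p : partition) : option partition :=
  match [seq n.1 | n <- reduced_signature p i & n.2] with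
  | x :: _ => Some (add_node p x)
  | [::] => None
  end.

Definition etil (i : nat) (p : partition) : option partition :=
  match rev [seq n.1 | n <- reduced_signature p i & ~~ n.2] with
  | x :: _ => Some (remove_node p x)
  | [::] => None
  end.

Definition iter_opt (k : nat) (g : partition -> option partition)
  (p : partition) : option partition :=
  iter k (fun o => obind g o) (Some p).

Definition nres (p : partition) (j : nat) : nat :=
  sumn [seq count (fun y => res x y == j) (iota 1 (part p x)) | x <- iota 1 (size p)].

(* <wt(b), h_i>, with wt(b) = Lambda_0 - sum over nodes of alpha_{res};
   Cartan matrix of A_1^(1): <alpha_i,h_i> = 2, <alpha_{1-i},h_i> = -2. *)
Definition wt_h (p : partition) (i : nat) : int :=
  ((i == 0%N)%:Z - 2%:Z * (nres p i)%:Z + 2%:Z * (nres p (1 - i))%:Z)%R.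

Definition sref (i : nat) (p : partition) : option partition :=
  match wt_h p i with
  | Posz k => iter_opt k (ftil i) p
  | Negz k => iter_opt k.+1 (etil i) p   (* Negz k = -(k+1) *)
  end.

Definition op_step (mu nu : partition) : bool :=
  [&& alternating mu, alternating nu &
   [exists eps : 'I_2,
      (iter_opt (nparts mu) (ftil eps) mu == Some nu)
      || (sref eps mu == Some nu)]].

(* Main.v *)
Require Import Defs.
From mathcomp Require Import all_boot all_order all_algebra.
From mathcomp Require Import zify.
Set Implicit Arguments. Unset Strict Implicit. Unset Printing Implicit Defensive.

Definition altP (p : seq nat) : Prop :=
  [/\ (forall j, j < size p -> 0 < nth 0 p j),
      (forall j, j.+1 < size p -> nth 0 p j.+1 < nth 0 p j) &
      (forall j, j.+1 < size p -> odd (nth 0 p j) != odd (nth 0 p j.+1))].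

Lemma altE p : alternating p <-> altP p.
Proof.
rewrite /alternating /two_regular; split.
  case/andP => /andP [/(sortedP 0) H1 /(all_nthP 0) H2] /(sortedP 0) H3.
  by split.
case => H2 H1 H3; apply/andP; split; [apply/andP; split|].
- by apply/(sortedP 0) => j hj; apply: H1.
- by apply/(all_nthP 0) => j hj; apply: H2.
- by apply/(sortedP 0) => j hj; apply: H3.
Qed.

Lemma alt_par p j : altP p -> j < size p -> odd (nth 0 p j + j) = odd (nth 0 p 0).
Proof.
case=> _ _ H3; elim: j => [|j IH] hj; first by rewrite addn0.
rewrite -IH; last by apply: ltnW.
have := H3 j hj; rewrite addnS oddS !oddD.
by case: (odd (nth 0 p j)); case: (odd (nth 0 p j.+1)); case: (odd j).
Qed.

Lemma alt_le p j d : altP p -> j + d < size p -> nth 0 p (j + d) <= nth 0 p j.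
Proof.
case=> _ H2 _; elim: d => [|d IH] h; first by rewrite addn0.
rewrite addnS in h *; apply: leq_trans (IH (ltnW h)); exact: ltnW (H2 _ h).
Qed.

Definition inc (k : nat) (m : seq nat) := mkseq (fun j => nth 0 m j + (j < k)) (size m).

Lemma size_inc k m : size (inc k m) = size m.
Proof. by rewrite size_mkseq. Qed.

Lemma nth_inc k m j : nth 0 (inc k m) j = if j < size m then nth 0 m j + (j < k) else 0.
Proof.
case: ifP => h; first by rewrite nth_mkseq.
by rewrite nth_default // size_inc leqNgt h.
Qed.

Lemma resE x y (t : bool) : (res x y == t) = (odd (y + x) == t).
Proof. by rewrite /res modn2; case: (odd _); case: t. Qed.

Definition sigent (p : seq nat) (i x : nat) : seq (nat * bool) :=
  (if addable p x && (res x (part p x).+1 == i) then [:: (x, true)] else [::]) ++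
  (if removable p x && (res x (part p x) == i) then [:: (x, false)] else [::]).

Lemma signatureE p i : signature p i = flatten [seq sigent p i x | x <- iota 1 (size p).+1].
Proof. by []. Qed.

Lemma part_inc k m j : j < size m -> part (inc k m) j.+1 = nth 0 m j + (j < k).
Proof. by move=> h; rewrite /part /= nth_inc h. Qed.

Lemma ent1 m k j : altP m -> k <= size m -> j < k ->
  sigent (inc k m) (odd (nth 0 m 0)) j.+1 = [:: (j.+1, false)].
Proof.
move=> A hk hj; have hb : j < size m by apply: leq_trans hk.
have P := alt_par A hb; move: (P); rewrite oddD => Pa.
case: A => A1 A2 A3.
have R : removable (inc k m) j.+1.
  rewrite /removable size_inc hb /= /part /= !nth_inc hb hj.
  case: ifP => h1 //; last by rewrite addn1.
  have := A2 j h1; case: (j.+1 < k) => /=; lia.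
rewrite /sigent R part_inc // hj /=.
rewrite !resE !(addSn, addnS, addn1, addn0, oddS, oddD) -Pa.
by case: (odd (nth 0 m j)); case: (odd j); rewrite /= ?andbF.
Qed.

Lemma ent2 m k j : altP m -> k <= j -> j < size m ->
  sigent (inc k m) (odd (nth 0 m 0)) j.+1 = [:: (j.+1, true)].
Proof.
move=> A hk hb.
have P := alt_par A hb; move: (P); rewrite oddD => Pa.
case: A => A1 A2 A3.
have hj : (j < k) = false by apply/negbTE; rewrite -leqNgt.
have R : addable (inc k m) j.+1.
  rewrite /addable size_inc /=.
  have -> : (j.+1 <= (size m).+1) = true by apply/idP; lia.
  case: j hk hb hj {P Pa} => [//|j] hk hb hj /=.
  rewrite /part /= !nth_inc hb (ltnW hb).
  have := A2 j hb; case: (j < k); rewrite hj /=; lia.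
rewrite /sigent R part_inc // hj /=.
rewrite !resE !(addSn, addnS, addn1, addn0, oddS, oddD) -Pa.
by case: (odd (nth 0 m j)); case: (odd j); rewrite /= ?andbF.
Qed.

Lemma ent3 m k : altP m -> 0 < size m -> k <= size m ->
  sigent (inc k m) (odd (nth 0 m 0)) (size m).+1 =
  if odd (nth 0 m (size m).-1) then [:: ((size m).+1, true)] else [::].
Proof.
move=> A hb hk.
have hb' : (size m).-1 < size m by rewrite prednK.
have P := alt_par A hb'; move: (P); rewrite oddD => Pa.
case: A => A1 A2 A3.
have R : addable (inc k m) (size m).+1.
  rewrite /addable size_inc /= leqnn /part /=.
  rewrite [nth 0 _ (size m)]nth_default ?size_inc // nth_inc prednK // leqnn.
  have := A1 _ hb'; lia.
have R2 : removable (inc k m) (size m).+1 = false.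
  by rewrite /removable size_inc ltnn /=.
rewrite /sigent R R2 /part /= nth_default ?size_inc //.
rewrite resE -Pa.
move: hb Pa; case: (size m) => [//|b] _ /= _.
by case: (odd (nth 0 m b)); case: (odd b).
Qed.

Lemma flatten_map1 (T U : eqType) (g : T -> seq U) (h : T -> U) s :
  {in s, forall x, g x = [:: h x]} -> flatten (map g s) = map h s.
Proof.
elim: s => [//|x s IH] H /=; rewrite H ?mem_head // IH // => y hy.
by apply: H; rewrite in_cons hy orbT.
Qed.

Definition tailsig (m : seq nat) : seq (nat * bool) :=
  if odd (nth 0 m (size m).-1) then [:: ((size m).+1, true)] else [::].

Lemma sig_inc m k : altP m -> 0 < size m -> k <= size m ->
  signature (inc k m) (odd (nth 0 m 0)) =
  [seq (x, false) | x <- iota 1 k] ++ ([seq (x, true) | x <- iota k.+1 (size m - k)]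
   ++ tailsig m).
Proof.
move=> A hb hk; rewrite signatureE size_inc.
have -> : (size m).+1 = k + ((size m - k) + 1) by lia.
rewrite !iotaD !map_cat !flatten_cat.
have -> : 1 + k + (size m - k) = (size m).+1 by lia.
rewrite /= ent3 // cats0 /tailsig; congr (_ ++ (_ ++ _)).
  apply: flatten_map1 => x; rewrite mem_iota => /andP [h1 h2].
  by case: x h1 h2 => [//|j] _ h2; apply: ent1 => //; lia.
apply: flatten_map1 => x; rewrite mem_iota => /andP [h1 h2].
by case: x h1 h2 => [//|j] h1 h2; apply: ent2 => //; lia.
Qed.

Lemma foldl_true st s : all (fun n : nat * bool => n.2) s ->
  foldl red_step st s = rev s ++ st.
Proof.
elim: s st => [//|[x b] s IH] st /= /andP [hb hs].
by rewrite hb IH // rev_cons cat_rcons.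
Qed.

Lemma foldl_false st s : all (fun n : nat * bool => ~~ n.2) s ->
  all (fun n : nat * bool => ~~ n.2) st -> foldl red_step st s = rev s ++ st.
Proof.
elim: s st => [//|[x b] s IH] st /= /andP [hb hs] hst.
rewrite IH ?rev_cons ?cat_rcons //.
  by move: hb; case: b => //= _; case: st hst => [//|[y c] st] /= /andP [hc _]; move: hc; case: c.
move: hb; case: b => //= _; case: st hst => [//|[y c] st] /= /andP [hc hst].
by move: hc; case: c => //= _; rewrite hst.
Qed.

Lemma red_sig m k : altP m -> 0 < size m -> k <= size m ->
  reduced_signature (inc k m) (odd (nth 0 m 0)) = signature (inc k m) (odd (nth 0 m 0)).
Proof.
move=> A hb hk; rewrite /reduced_signature sig_inc // foldl_cat.
have F : all (fun n : nat * bool => ~~ n.2) [seq (x, false) | x <- iota 1 k].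
  by elim: (iota 1 k).
rewrite (@foldl_false [::] _ F) //.
rewrite foldl_true ?cats0 ?rev_cat ?revK //.
rewrite all_cat /tailsig; apply/andP; split; first by elim: (iota _ _).
by case: ifP.
Qed.

Lemma filt_false (l : seq nat) : [seq n.1 | n <- [seq (x, false) | x <- l] & n.2] = [::].
Proof. by elim: l. Qed.

Lemma filt_true (l : seq nat) : [seq n.1 | n <- [seq (x, true) | x <- l] & n.2] = l.
Proof. by elim: l => //= x l ->. Qed.

Lemma ftil_inc m k : altP m -> 0 < size m -> k < size m ->
  ftil (odd (nth 0 m 0)) (inc k m) = Some (inc k.+1 m).
Proof.
move=> A hb hk; rewrite /ftil red_sig ?(ltnW hk) // sig_inc ?(ltnW hk) //.
rewrite filter_cat map_cat filt_false filter_cat map_cat filt_true /=.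
have -> : size m - k = (size m - k.+1).+1 by lia.
rewrite /=; congr Some.
rewrite /add_node size_inc; have -> : (k.+1 == (size m).+1) = false by apply/negbTE; lia.
apply: (@eq_from_nth _ 0); first by rewrite size_set_nth !size_inc; apply/maxn_idPr.
move=> j hj; rewrite nth_set_nth /= nth_inc; rewrite size_set_nth size_inc in hj.
rewrite /part /= !nth_inc hk.
case: eqP => [->|ne]; first by rewrite hk ltnSn ltnn addn1 addn0.
case: ifP => // h; congr (_ + _); apply/eqP; case: ltngtP ne; lia.
Qed.

Lemma ftil_last m : altP m -> 0 < size m -> odd (nth 0 m (size m).-1) ->
  ftil (odd (nth 0 m 0)) (inc (size m) m) = Some (rcons (inc (size m) m) 1).
Proof.
move=> A hb ho; rewrite /ftil red_sig // sig_inc //.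
rewrite filter_cat map_cat filt_false filter_cat map_cat filt_true subnn /= /tailsig ho /=.
by rewrite /add_node size_inc eqxx.
Qed.

Lemma inc0 m : inc 0 m = m.
Proof.
apply: (@eq_from_nth _ 0); first by rewrite size_inc.
by move=> j; rewrite size_inc => h; rewrite nth_inc h addn0.
Qed.

Lemma iter_inc m k : altP m -> 0 < size m -> k <= size m ->
  iter_opt k (ftil (odd (nth 0 m 0))) m = Some (inc k m).
Proof.
move=> A hb; elim: k => [|k IH] hk; first by rewrite inc0.
by rewrite /iter_opt iterS -/(iter_opt _ _ _) IH ?(ltnW hk) //= ftil_inc.
Qed.

Lemma cnt x (t : bool) m n :
  count (fun y => res x y == t) (iota m n) = n./2 + (odd n && (odd (m + x) == t)).
Proof.
elim: n m => [//|n IH] m; rewrite [iota _ _]/= /= IH resE addSn oddS.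
rewrite uphalf_half; case: (odd n); case: (odd (m + x)); case: (t) => /=; lia.
Qed.

Lemma sumn_mapD (T : Type) (f g : T -> nat) s :
  sumn [seq f x + g x | x <- s] = sumn (map f s) + sumn (map g s).
Proof. elim: s => [//|x s IH] /=; rewrite IH; lia. Qed.

Lemma sumn_bool (T : Type) (a : pred T) s :
  sumn [seq nat_of_bool (a x) | x <- s] = count a s.
Proof. by elim: s => [//|x s IH] /=; rewrite IH. Qed.

Lemma nresE m (t : bool) : nres m t =
  sumn [seq (part m x)./2 + (odd (part m x) && (odd (1 + x) == t)) | x <- iota 1 (size m)].
Proof. by rewrite /nres; congr sumn; apply: eq_map => x; rewrite cnt. Qed.

Lemma wt_alt m : altP m -> 0 < size m -> odd (nth 0 m (size m).-1) ->
  wt_h m (odd (nth 0 m 0)) = Posz (size m).+1.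
Proof.
move=> A hb ho; set c := odd (nth 0 m 0).
have P : forall x, x \in iota 1 (size m) -> odd (part m x) = (odd x == c).
  move=> x; rewrite mem_iota => /andP [h1 h2]; case: x h1 h2 => [//|j] _ h2.
  rewrite /part /= /c -(alt_par A (_ : j < size m)); last by lia.
  by rewrite oddD /=; case: (odd (nth 0 m j)); case: (odd j).
have N1 : nres m c = sumn [seq (part m x)./2 | x <- iota 1 (size m)].
  rewrite nresE sumn_mapD; set S := sumn _; rewrite (_ : sumn _ = 0) ?addn0 //.
  rewrite (_ : map _ _ = [seq 0 | _ <- iota 1 (size m)]); first by elim: (iota _ _).
  apply/eq_in_map => x hx /=; rewrite P // /=; by case: (odd x); case: (c).
have N2 : nres m (~~ c) = sumn [seq (part m x)./2 | x <- iota 1 (size m)] +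
            count (fun x => res 0 x == c) (iota 1 (size m)).
  rewrite nresE sumn_mapD -sumn_bool; congr (_ + sumn _).
  apply/eq_in_map => x hx /=; rewrite P // resE addn0 /=.
  by case: (odd x); case: (c).
have Hc : c = odd (size m).
  rewrite /c -(alt_par A (_ : (size m).-1 < size m)); last by lia.
  move: hb ho; case: (size m) => [//|b] _ /= ho; rewrite oddD ho /=.
  by case: (odd b).
rewrite cnt in N2; rewrite /wt_h.
have -> : (1 - c)%N = ~~ c by case: (c).
rewrite N1 N2; move: Hc; rewrite /=; set H := sumn _ => Hc.
rewrite Hc; have := odd_double_half (size m).
case: (odd (size m)) => /= E; rewrite -[in RHS]E -!muln2; lia.
Qed.

Lemma alt_inc m : altP m -> altP (inc (size m) m).
Proof.
case=> A1 A2 A3; split; rewrite size_inc => j hj.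
- by rewrite nth_inc hj addn1.
- rewrite !nth_inc hj (ltnW hj) !addn1 ltnS; exact: A2.
- rewrite !nth_inc hj (ltnW hj) !addn1 /=.
  by have := A3 j hj; case: (odd _); case: (odd _).
Qed.

Lemma alt_rcons m : altP m -> 0 < size m -> odd (nth 0 m (size m).-1) ->
  altP (rcons (inc (size m) m) 1).
Proof.
move=> A hb ho; have := alt_inc A; case=> A1 A2 A3; rewrite size_inc in A1 A2 A3.
split; rewrite size_rcons size_inc => j hj; rewrite ?nth_rcons size_inc.
- case: ifP => h; first exact: A1.
  by have -> : j == size m by lia.
- case: (ltnP j.+1 (size m)) => h; first by rewrite (ltnW h); apply: A2.
  have e : j = (size m).-1 by lia.
  have E1 : (j.+1 == size m) = true by lia.
  have E2 : (j < size m) = true by lia.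
  have [B1 _ _] := A.
  have E0 : (j.+1 < size m) = false by lia.
  rewrite ?E0 E1 E2 /= nth_inc E2 addn1 ltnS; exact: B1.
- case: (ltnP j.+1 (size m)) => h; first by rewrite (ltnW h); apply: A3.
  have e : j = (size m).-1 by lia.
  have E1 : (j.+1 == size m) = true by lia.
  have E2 : (j < size m) = true by lia.
  have E0 : (j.+1 < size m) = false by lia.
  rewrite ?E0 E1 E2 /= nth_inc E2 addn1 /= -e in ho *; by rewrite ho.
Qed.

Lemma step_widen m : altP m -> 0 < size m -> op_step m (inc (size m) m).
Proof.
move=> A hb; rewrite /op_step; apply/and3P; split; try apply/altE => //.
  exact: alt_inc.
have h2 : (odd (nth 0 m 0) : nat) < 2 by case: (odd _).
apply/existsP; exists (Ordinal h2); apply/orP; left.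
by rewrite /= /nparts iter_inc.
Qed.

Lemma step_deepen m : altP m -> 0 < size m -> odd (nth 0 m (size m).-1) ->
  op_step m (rcons (inc (size m) m) 1).
Proof.
move=> A hb ho; rewrite /op_step; apply/and3P; split; try apply/altE => //.
  exact: alt_rcons.
have h2 : (odd (nth 0 m 0) : nat) < 2 by case: (odd _).
apply/existsP; exists (Ordinal h2); apply/orP; right.
rewrite /= /sref wt_alt // /iter_opt iterS -/(iter_opt _ _ _) iter_inc //=.
by rewrite ftil_last.
Qed.

Lemma step_base : op_step [::] [:: 1].
Proof.
apply/and3P; split => //; apply/existsP; exists ord0; apply/orP; right.
by vm_compute.
Qed.

Lemma odd_pred a : 0 < a -> odd a.-1 = ~~ odd a.
Proof. by case: a => //= a _; rewrite negbK. Qed.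

Lemma alt_last p j : altP p -> j < size p -> nth 0 p (size p).-1 <= nth 0 p j.
Proof.
move=> A hj; have := @alt_le p j ((size p).-1 - j) A.
by rewrite subnKC; [apply; lia | lia].
Qed.

Lemma alt_pred p : altP p -> (forall j, j < size p -> 1 < nth 0 p j) ->
  altP (map predn p).
Proof.
case=> A1 A2 A3 H; split; rewrite size_map => j hj.
- rewrite (nth_map 0) //; have := H j hj; lia.
- rewrite !(nth_map 0) ?(ltnW hj) //; have := A2 j hj; have := H _ hj; lia.
- have h1 := H _ (ltnW hj); have h2 := H _ hj.
  rewrite !(nth_map 0) ?(ltnW hj) // !odd_pred; try lia.
  by have := A3 j hj; case: (odd _); case: (odd _).
Qed.

Lemma main_aux n : forall lam, nth 0 lam 0 <= n -> altP lam ->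
  exists ms : seq (seq nat), path op_step [::] ms && (last [::] ms == lam).
Proof.
elim: n => [|n IH] lam hn A.
  case: lam hn A => [|a l] hn A; first by exists [::].
  by case: A => A1 _ _; have := A1 0 isT; move: hn => /= hn; lia.
case: lam hn A => [|a l] hn A; first by exists [::].
have hb : 0 < size (a :: l) by [].
move: (a :: l) hb hn A => lam hb hn A.
have [A1 A2 A3] := A.
have Hlast := alt_last A.
case: (eqVneq (nth 0 lam (size lam).-1) 1) => h1.
- case: (eqVneq (size lam) 1) => hs.
    have -> : lam = [:: 1].
      by move: hs h1; case: lam {A A1 A2 A3 Hlast hn hb} => [|x [|y l']] //= _ ->.
    by exists [:: [:: 1]]; rewrite /= step_base eqxx.
  have hs2 : 1 < size lam by lia.
  set mu := map predn (take (size lam).-1 lam).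
  have stk : size (take (size lam).-1 lam) = (size lam).-1.
    by rewrite size_takel // leq_pred.
  have smu : size mu = (size lam).-1 by rewrite size_map stk.
  have nmu : forall j, j < (size lam).-1 -> nth 0 mu j = (nth 0 lam j).-1.
    by move=> j hj; rewrite (nth_map 0) ?nth_take ?stk.
  have big : forall j, j < (size lam).-1 -> 1 < nth 0 lam j.
    move=> j hj; have hj1 : j.+1 < size lam by lia.
    have := Hlast j.+1 hj1; have := A2 j hj1; lia.
  have Amu : altP mu.
    have := @alt_pred (take (size lam).-1 lam).
    have Atk : altP (take (size lam).-1 lam).
      split; rewrite stk => j hj; rewrite ?nth_take //; try lia.
      * by apply: A1; lia.
      * by apply: A2; lia.
      * by apply: A3; lia.
    apply => // j; rewrite stk.
    by move=> hj; rewrite nth_take //; apply: big.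
  have hmu : 0 < size mu by lia.
  have omu : odd (nth 0 mu (size mu).-1).
    rewrite smu nmu; last by lia.
    have h2 : (size lam).-2 < (size lam).-1 by lia.
    rewrite odd_pred; last by have := big _ h2; lia.
    have h3 : (size lam).-2.+1 < size lam by lia.
    have := A3 _ h3.
    have e : (size lam).-2.+1 = (size lam).-1 by lia.
    by rewrite e h1; case: (odd _).
  have hm0 : nth 0 mu 0 <= n by rewrite nmu; [have := hn; rewrite /=; lia | lia].
  have [ms /andP [Hp /eqP Hl]] := IH mu hm0 Amu.
  exists (rcons ms lam); rewrite rcons_path Hp Hl last_rcons eqxx andbT /=.
  have -> : lam = rcons (inc (size mu) mu) 1.
    apply: (@eq_from_nth _ 0); first by rewrite size_rcons size_inc smu; lia.
    move=> j hj; rewrite nth_rcons size_inc nth_inc smu.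
    case: ltnP => hj1; first by rewrite nmu // addn1 prednK //; have := big j hj1; lia.
    case: eqP => [->|ne]; first by [].
    by rewrite nth_default //; lia.
  exact: step_deepen.
- have big : forall j, j < size lam -> 1 < nth 0 lam j.
    move=> j hj; have hl : (size lam).-1 < size lam by lia.
    have := Hlast j hj; have := A1 _ hl; move: h1 => /eqP h1; lia.
  set mu := map predn lam.
  have smu : size mu = size lam by rewrite size_map.
  have Amu : altP mu by apply: alt_pred.
  have hm0 : nth 0 mu 0 <= n by rewrite (nth_map 0) //=; move: hn => /= hn; lia.
  have [ms /andP [Hp /eqP Hl]] := IH mu hm0 Amu.
  exists (rcons ms lam); rewrite rcons_path Hp Hl last_rcons eqxx andbT /=.
  have -> : lam = inc (size mu) mu.
    apply: (@eq_from_nth _ 0); first by rewrite size_inc smu.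
    move=> j hj; rewrite nth_inc smu hj (nth_map 0) // addn1 prednK //.
    by have := big j hj; lia.
  by apply: step_widen; rewrite // smu.
Qed.

Theorem mainTheorem3 (lam : seq nat) :
  alternating lam ->
  exists ms : seq (seq nat), path op_step [::] ms && (last [::] ms == lam).
Proof. by move/altE; apply: (@main_aux (nth 0 lam 0)). Qed.
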